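(* Let $(a',b',c',d')\in\mathbb{Z}_{\ge0}^4$, let $t$ be an integer with $1\le t\le q_0-1$, and assume $\lVert(a',b',c',d')\rVert\le t(q+2q_0+1)$. Then there exists a unique $(a,b,c,d)\in\mathbb{Z}_{\ge0}^4$ with $b\in\{0,1\}$ and $\lVert(a,b,c,d)\rVert=\lVert(a',b',c',d')\rVert$.
   Context: $n\ge2$ is an integer, $q_0=2^n$, $q=2q_0^2$, and for $(a,b,c,d)\in\mathbb{Z}_{\ge0}^4$ one sets $\lVert(a,b,c,d)\rVert:=aq+b(q+q_0)+c(q+2q_0)+d(q+2q_0+1)$. *)

(* Defs.v *)
From mathcomp Require Import all_boot.

Definition q0 (n : nat) : nat := 2 ^ n.
Definition qq (n : nat) : nat := 2 * (q0 n) ^ 2.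

Definition wnorm (n a b c d : nat) : nat :=
  a * qq n + b * (qq n + q0 n) + c * (qq n + 2 * q0 n)
  + d * (qq n + 2 * q0 n + 1).

(* Main.v *)
Require Import Defs.
From mathcomp Require Import all_boot.
From mathcomp Require Import zify.

Lemma euclid_uniq r x1 y1 x2 y2 : y1 < r -> y2 < r ->
  x1 * r + y1 = x2 * r + y2 -> x1 = x2 /\ y1 = y2.
Proof.
move=> h1 h2 e.
have r0 : 0 < r by lia.
have := congr1 (fun z => z %/ r) e; have := congr1 (fun z => z %% r) e.
rewrite /= !modnMDl !divnMDl // !modn_small // !divn_small //.
move=> -> ; rewrite !addn0 => -> //.
Qed.

Lemma bounds R Q t a b c d : Q = 2 * R * R -> t + 1 <= R ->
  a * Q + b * (Q + R) + c * (Q + 2 * R) + d * (Q + 2 * R + 1)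
    <= t * (Q + 2 * R + 1) ->
  d < R /\ a + b + c + d <= t.
Proof.
move=> hQ htR hN.
have hd : d <= t.
  rewrite -(leq_pmul2r (_ : 0 < Q + 2 * R + 1)) //; lia.
split; first lia.
rewrite leqNgt; apply/negP => hs.
have h1 : (t + 1) * Q <= (a + b + c + d) * Q by apply: leq_mul; lia.
have h2 : (t + 1) * (2 * R) <= R * (2 * R) by apply: leq_mul; lia.
subst Q. nia.
Qed.

Theorem lemma3p2 (n : nat) (hn : 2 <= n) (a' b' c' d' t : nat)
  (ht1 : 1 <= t) (ht2 : t <= q0 n - 1)
  (hbound : wnorm n a' b' c' d' <= t * (qq n + 2 * q0 n + 1)) :
  exists! x : nat * nat * nat * nat,
    let '(a, b, c, d) := x in
    b <= 1 /\ wnorm n a b c d = wnorm n a' b' c' d'.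
Proof.
have hR : 1 <= q0 n by rewrite /q0 expn_gt0.
have hQ : qq n = 2 * q0 n * q0 n by rewrite /qq -mulnA.
move: hbound; rewrite /wnorm.
set R := q0 n in ht2 hR hQ *; set Q := qq n in hQ *.
have htR : t + 1 <= R by lia.
move=> hN.
exists (a' + b' %/ 2, b' %% 2, c' + b' %/ 2, d'); split.
  split; first by rewrite -ltnS ltn_pmod.
  have hb := divn_eq b' 2.
  rewrite /wnorm -/R -/Q.
  rewrite [in RHS]hb. nia.
case=> [[[a b] c] d] [hb ha].
move: ha; rewrite /wnorm -/R -/Q => he.
have [d1 s1] := bounds _ _ _ _ _ _ _ hQ htR hN.
have hN2 := hN; rewrite -he in hN2.
have [d2 s2] := bounds _ _ _ _ _ _ _ hQ htR hN2.
have E : forall a b c d, a * Q + b * (Q + R) + c * (Q + 2 * R) + d * (Q + 2 * R + 1)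
   = ((a + b + c + d) * (2 * R) + (b + 2 * c + 2 * d)) * R + d.
  by move=> ????; rewrite hQ; lia.
rewrite !E in he.
have [e1 ed] := euclid_uniq _ _ _ _ _ d2 d1 he.
have m1 : b + 2 * c + 2 * d < 2 * R by lia.
have m2 : b' + 2 * c' + 2 * d' < 2 * R by lia.
have [es em] := euclid_uniq _ _ _ _ _ m1 m2 e1.
have hb2 := divn_eq b' 2.
have hm := ltn_pmod b' (isT : 0 < 2).
congr (_, _, _, _); lia.
Qed.
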